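(* Let $n\ge 2$ and let $\rho$ be an $n$-qubit symmetric state that is entangled. Then $\rho$ is genuinely entangled and $$l(\rho)=\min\{k\in\{2,\dots,n\}\mid \rho_{[k]}\text{ is entangled}\}.$$
   Context: Let $n\ge 2$, $[n]=\{1,\dots,n\}$, and $\mathcal H_{[n]}=\bigotimes_{i=1}^n\mathcal H_i$ with $\mathcal H_i\cong\mathbb C^2$. For $S\subseteq[n]$, $\mathcal H_S=\bigotimes_{j\in S}\mathcal H_j$, and for a density matrix $\rho$ on $\mathcal H_{[n]}$, $\rho_S=\mathrm{Tr}_{[n]\setminus S}\rho$; $\rho_{[k]}:=\rho_{\{1,\dots,k\}}$. A pure state $|\psi\rangle$ is separable with respect to the bipartition $S|\bar S$ if $|\psi\rangle=|\alpha\rangle_S\otimes|\beta\rangle_{\bar S}$; it is biseparable if this holds for some $\emptyset\ne S\subsetneq[n]$, and fully separable if it is separable with respect to every bipartition. A mixed state is biseparable (resp. fully separable) if it is a convex combination of biseparable (resp. fully separable) pure states; it is entangled if not fully separable and genuinely entangled if not biseparable. For a collection $\mathcal S$ of subsets of $[n]$, the compatibility set is $\mathcal C(\rho,\mathcal S)=\{\sigma\text{ density matrix on }\mathcal H_{[n]}:\sigma_S=\rho_S\ \forall S\in\mathcal S\}$. $\mathcal S$ determines $\rho$ if $\mathcal C(\rho,\mathcal S)=\{\rho\}$, and $\mathcal S$ detects $\rho$'s genuine multipartite entanglement (GME) if every element of $\mathcal C(\rho,\mathcal S)$ is genuinely entangled. The state determination length is $L(\rho)=\min_{\mathcal S\text{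 determines }\rho}\max_{S\in\mathcal S}|S|$, and for genuinely entangled $\rho$ the entanglement detection length is $l(\rho)=\min_{\mathcal S\text{ detects }\rho\text{'s GME}}\max_{S\in\mathcal S}|S|$. The symmetric subspace of $\mathcal H_S$ consists of vectors invariant under swapping any two qubits of $S$; a state on $\mathcal H_S$ is symmetric if its range is contained in the symmetric subspace. *)

(* Defs.v *)
From HB Require Import structures.
From mathcomp Require Import all_boot all_order all_algebra all_fingroup.
From mathcomp Require Import complex.
From mathcomp Require Import reals.
Unset Printing Implicit Defensive.
Import Order.TTheory GRing.Theory Num.Theory.
Local Open Scope ring_scope.

Section Qubits.
Context {R : realType}.
Notation C := (R[i]).

(* A finite set of qubits is indexed by a finType I; computational basis
   states of H_I = (C^2)^{(x) I} are configurations I -> bool. *)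
Definition cfg (I : finType) := {ffun I -> bool}.
Definition qvec (I : finType) := cfg I -> C.
Definition qop (I : finType) := cfg I -> cfg I -> C.

Definition sub {I : finType} (S : {set I}) := {i : I | i \in S}.

Definition restr {I : finType} (S : {set I}) (x : cfg I) : cfg (sub S) :=
  [ffun j => x (val j)].

Definition glue {I : finType} (S : {set I}) (x : cfg (sub S)) (z : cfg I) : cfg I :=
  [ffun i => if insub i is Some j then x j else z i].

Definition ptrace {I : finType} (S : {set I}) (rho : qop I) : qop (sub S) :=
  fun x y => \sum_(z : cfg I | [forall i, (i \in S) ==> ~~ z i])
               rho (glue S x z) (glue S y z).

Definition density {I : finType} (rho : qop I) : Prop :=
  (forall x y, rho x y = (rho y x)^*) /\
  (forall v : qvec I, 0 <= \sum_x \sum_y (v x)^* * rho x y * v y) /\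
  \sum_x rho x x = 1.

Definition unit_vec {I : finType} (psi : qvec I) : Prop :=
  \sum_x (psi x)^* * psi x = 1.

Definition proj {I : finType} (psi : qvec I) : qop I :=
  fun x y => psi x * (psi y)^*.

Definition sep_wrt {I : finType} (S : {set I}) (psi : qvec I) : Prop :=
  exists (alpha : qvec (sub S)) (beta : qvec (sub (~: S))),
    forall x, psi x = alpha (restr S x) * beta (restr (~: S) x).

Definition pure_bisep {I : finType} (psi : qvec I) : Prop :=
  exists S : {set I}, [/\ S != set0, S != setT & sep_wrt S psi].

Definition pure_fullsep {I : finType} (psi : qvec I) : Prop :=
  forall S : {set I}, sep_wrt S psi.

Definition conv_pure {I : finType} (P : qvec I -> Prop) (rho : qop I) : Prop :=
  exists (m : nat) (p : 'I_m -> C) (psi : 'I_m -> qvec I),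
    [/\ forall j, 0 <= p j,
        \sum_j p j = 1,
        forall j, unit_vec (psi j) /\ P (psi j)
      & forall x y, rho x y = \sum_j p j * proj (psi j) x y].

Definition biseparable {I : finType} (rho : qop I) := conv_pure (@pure_bisep I) rho.
Definition fully_separable {I : finType} (rho : qop I) :=
  conv_pure (@pure_fullsep I) rho.
Definition entangled {I : finType} (rho : qop I) := ~ fully_separable rho.
Definition genuinely_entangled {I : finType} (rho : qop I) := ~ biseparable rho.

Definition compatible {I : finType} (rho : qop I) (Sc : {set {set I}})
  (sigma : qop I) : Prop :=
  density sigma /\
  forall S, S \in Sc -> forall x y, ptrace S sigma x y = ptrace S rho x y.

Definition detects_GME {I : finType} (Sc : {set {set I}}) (rho : qop I) : Prop :=
  forall sigma, compatible rho Sc sigma -> genuinely_entangled sigma.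

(* L = l(rho) := min over GME-detecting Sc of max_{S in Sc} |S| *)
Definition is_detection_length {I : finType} (rho : qop I) (L : nat) : Prop :=
  (exists Sc, detects_GME Sc rho /\ \max_(S in Sc) #|S| = L) /\
  (forall Sc, detects_GME Sc rho -> (L <= \max_(S in Sc) #|S|)%N).

Definition swapcfg {I : finType} (i j : I) (x : cfg I) : cfg I :=
  [ffun a => x (tperm i j a)].

Definition symmetric_vec {I : finType} (v : qvec I) : Prop :=
  forall (i j : I) x, v (swapcfg i j x) = v x.

Definition apply_op {I : finType} (rho : qop I) (v : qvec I) : qvec I :=
  fun x => \sum_y rho x y * v y.

Definition symmetric_state {I : finType} (rho : qop I) : Prop :=
  density rho /\ forall v, symmetric_vec (apply_op rho v).

(* [k] = {1,...,k}, i.e. the first k qubits *)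
Definition first (n k : nat) : {set 'I_n} := [set i : 'I_n | (i < k)%N].

End Qubits.

(* Main.v *)
Require Import Defs.
From HB Require Import structures.
From mathcomp Require Import all_boot all_order all_algebra all_fingroup.
From mathcomp Require Import complex.
From mathcomp Require Import reals.
From mathcomp Require Import ring zify.
From Stdlib Require Import Classical.
Set Implicit Arguments. Unset Strict Implicit. Unset Printing Implicit Defensive.
Import Order.TTheory GRing.Theory Num.Theory.
Local Open Scope ring_scope.

Section W.
Context {R : realType}.
Local Notation C := (R[i]).

Definition mixc {I : finType} (S : {set I}) (u z : cfg I) : cfg I :=
  [ffun i => if i \in S then u i else z i].

Definition zon {I : finType} (S : {set I}) (z : cfg I) : bool :=
  [forall i, (i \in S) ==> ~~ z i].

Lemma glue_restr {I : finType} (S : {set I}) u z :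
  glue S (restr S u) z = mixc S u z.
Proof.
apply/ffunP=> i; rewrite !ffunE; case: insubP => [j Hi Hj|Hi].
  by rewrite ffunE Hj Hi.
by rewrite (negbTE Hi).
Qed.

Lemma restr_glue {I : finType} (S : {set I}) x z : restr S (glue S x z) = x.
Proof.
apply/ffunP=> j; rewrite !ffunE; case: insubP => [k Hi Hk|Hi].
  by congr (x _); apply: val_inj.
by case: j Hi => /= j Hj; rewrite Hj.
Qed.

Definition ptr {I : finType} (S : {set I}) (X : @qop R I) (u v : cfg I) : C :=
  ptrace S X (restr S u) (restr S v).

Lemma ptrE {I : finType} (S : {set I}) (X : @qop R I) u v :
  ptr S X u v = \sum_(z | zon S z) X (mixc S u z) (mixc S v z).
Proof. by rewrite /ptr /ptrace; apply: eq_bigr => z _; rewrite !glue_restr. Qed.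

Lemma ptrace_ptr {I : finType} (S : {set I}) (X : @qop R I) x y z :
  ptrace S X x y = ptr S X (glue S x z) (glue S y z).
Proof. by rewrite /ptr !restr_glue. Qed.


Lemma prod_split {I : finType} (S : {set I}) (F : I -> C) :
  \prod_i F i = \prod_(j : sub S) F (val j) * \prod_(j : sub (~: S)) F (val j).
Proof.
rewrite (bigID (fun i => i \in S)) /= -!big_sub; congr (_ * _).
by apply: eq_bigl => i; rewrite in_setC.
Qed.

Lemma sum_prod_zon {I : finType} (K : {set I}) (G : I -> bool -> C) :
  \sum_(z : cfg I | zon K z) \prod_i G i (z i) =
  \prod_i (if i \in K then G i false else G i false + G i true).
Proof.
have -> : \prod_i (if i \in K then G i false else G i false + G i true) =
  \prod_i \sum_(b : bool) (if i \in K then (if b then 0 else G i false) else G i b).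
  by apply: eq_bigr => i _; case: ifP => _; rewrite big_bool /= ?add0r // addrC.
rewrite bigA_distr_bigA /cfg big_mkcond /=; apply: eq_bigr => z _.
case: ifP => Hz.
  apply: eq_bigr => i _; case: ifP => // Hi.
  by move/forallP: Hz => /(_ i); rewrite Hi /= => /negbTE ->.
move/negbT: Hz; rewrite negb_forall; case/existsP => i.
rewrite negb_imply negbK; case/andP => Hi Hzi.
by rewrite (bigD1 i) //= Hi Hzi mul0r.
Qed.


Lemma zonP {I : finType} (K : {set I}) (z : cfg I) :
  reflect (forall i, i \in K -> z i = false) (zon K z).
Proof.
apply: (iffP forallP) => H i.
  by move=> Hi; move: (H i); rewrite Hi /= => /negbTE.
by apply/implyP => /H ->.
Qed.

Definition cfg0 {I : finType} : cfg I := [ffun => false].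

Lemma split_sum {I : finType} (S M : {set I}) (H : cfg I -> C) :
  S \subset M ->
  \sum_(z | zon S z) H z =
  \sum_(w | zon (S :|: ~: M) w) \sum_(z' | zon M z') H (mixc M w z').
Proof.
move=> SM; rewrite pair_big_dep /=.
rewrite (reindex_onto (fun p : cfg I * cfg I => mixc M p.1 p.2)
                      (fun z => (mixc M z cfg0, mixc M cfg0 z))) /=; last first.
  by move=> z _; apply/ffunP => i; rewrite !ffunE; case: (i \in M).
apply: eq_bigl => -[w z'] /=; apply/idP/idP.
  case/andP => /zonP H1 /eqP [Hw Hz]; apply/andP; split; apply/zonP => i Hi.
  - rewrite -Hw ffunE; case/setUP: Hi => Hi.
      by rewrite (subsetP SM _ Hi) -(H1 _ Hi) ffunE (subsetP SM _ Hi).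
    by rewrite inE in Hi; rewrite (negbTE Hi) ffunE.
  - by rewrite -Hz ffunE Hi ffunE.
case/andP => /zonP H1 /zonP H2; apply/andP; split.
  apply/zonP => i Hi; rewrite ffunE (subsetP SM _ Hi); apply: H1.
  by rewrite inE Hi.
apply/eqP; congr (_, _); apply/ffunP => i; rewrite !ffunE;
  case: (boolP (i \in M)) => Hi //=.
- by rewrite H1 // in_setU in_setC Hi orbT.
- by rewrite H2.
Qed.

Lemma ptr_split {I : finType} (S M : {set I}) (X : @qop R I) u v :
  S \subset M ->
  ptr S X u v = \sum_(w | zon (S :|: ~: M) w) ptr M X (mixc S u w) (mixc S v w).
Proof.
move=> SM; rewrite ptrE (split_sum _ SM); apply: eq_bigr => w _.
rewrite ptrE; apply: eq_bigr => z _.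
have E : forall a, mixc M (mixc S a w) z = mixc S a (mixc M w z).
  move=> a; apply/ffunP => i; rewrite !ffunE.
  case: (boolP (i \in S)) => Hi; first by rewrite (subsetP SM _ Hi).
  by case: ifP.
by rewrite !E.
Qed.


Lemma swapcfgK {I : finType} (a b : I) : involutive (swapcfg a b).
Proof. by move=> x; apply/ffunP => i; rewrite !ffunE tpermK. Qed.

Lemma mem_tperm_imset {I : finType} (a b : I) (S : {set I}) i :
  (i \in tperm a b @: S) = (tperm a b i \in S).
Proof. by rewrite (can_imset_pre _ (tpermK a b)) inE. Qed.

Lemma ptr_swap {I : finType} (S : {set I}) (X : @qop R I) (a b : I) u v :
  (forall x y, X (swapcfg a b x) (swapcfg a b y) = X x y) ->
  ptr S X u v = ptr (tperm a b @: S) X (swapcfg a b u) (swapcfg a b v).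
Proof.
move=> HX; rewrite !ptrE (reindex_inj (inv_inj (swapcfgK a b))) /=.
apply: eq_big => [z|z _].
  apply/zonP/zonP => H i Hi.
    rewrite mem_tperm_imset in Hi.
    by move: (H _ Hi); rewrite ffunE tpermK.
  by rewrite ffunE; apply: H; rewrite mem_tperm_imset tpermK.
have E : forall x, mixc (tperm a b @: S) (swapcfg a b x) z =
                   swapcfg a b (mixc S x (swapcfg a b z)).
  by move=> x; apply/ffunP => i; rewrite !ffunE mem_tperm_imset tpermK.
by rewrite !E HX.
Qed.


Lemma symA {I J : finType} (P : pred J) (X : @qop R I) (w : J -> C)
  (phi : J -> @qvec R I) (s : cfg I -> cfg I) :
  (forall t, P t -> 0 <= w t) ->
  (forall x y, X x y = \sum_(t | P t) w t * phi t x * (phi t y)^*) ->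
  (forall x y, X (s x) y = X x y) ->
  forall t x, P t -> w t != 0 -> phi t (s x) = phi t x.
Proof.
move=> w0 HX Hs t x Pt wt.
pose d t := phi t x - phi t (s x).
have E : \sum_(t | P t) w t * (d t * (d t)^*) = 0.
  have E' : \sum_(t | P t) w t * (d t * (d t)^*) =
     X x x - X x (s x) - X (s x) x + X (s x) (s x).
    rewrite !HX -!sumrB -big_split /=; apply: eq_bigr => t' _.
    rewrite /d rmorphB /=; ring.
  by rewrite E' !Hs; ring.
have H := psumr_eq0P (fun t Pt => mulr_ge0 (w0 t Pt) (mul_conjC_ge0 (d t))) E Pt.
by move/eqP: H; rewrite mulf_eq0 (negbTE wt) /= mul_conjC_eq0 subr_eq0 => /eqP ->.
Qed.


Lemma sum_drop {J : finType} (P P2 : pred J) (F : J -> C) :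
  (forall t, P2 t -> P t) -> (forall t, P t -> ~~ P2 t -> F t = 0) ->
  \sum_(t | P2 t) F t = \sum_(t | P t) F t.
Proof.
move=> H1 H2; rewrite [RHS](bigID P2) /= [X in _ + X]big1 ?addr0.
  by apply: eq_bigl => t; apply/idP/idP => [H|/andP[]//]; rewrite H H1.
by move=> t /andP[]; apply: H2.
Qed.

Lemma normsq_ge0 {I : finType} (phi : @qvec R I) : 0 <= \sum_x (phi x)^* * phi x.
Proof. by apply: sumr_ge0 => x _; rewrite mulrC mul_conjC_ge0. Qed.

Lemma normsq_eq0 {I : finType} (phi : @qvec R I) :
  \sum_x (phi x)^* * phi x = 0 -> forall x, phi x = 0.
Proof.
move=> H x.
have H0 : forall y, true -> 0 <= (phi y)^* * phi y.
  by move=> y _; rewrite mulrC mul_conjC_ge0.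
have /eqP := psumr_eq0P H0 H (i:=x) isT.
by rewrite mulrC mul_conjC_eq0 => /eqP.
Qed.

Lemma mix_conv {I J : finType} (Q : @qvec R I -> Prop) (P : pred J) (w : J -> C)
  (phi : J -> @qvec R I) (X : @qop R I) :
  (forall (c : C) v, Q v -> Q (fun x => c * v x)) ->
  (forall t, P t -> Q (phi t)) ->
  (forall t, P t -> 0 <= w t) ->
  (forall x y, X x y = \sum_(t | P t) w t * phi t x * (phi t y)^*) ->
  \sum_x X x x = 1 ->
  conv_pure Q X.
Proof.
move=> Qc Qphi w0 HX tr1.
pose nn t := \sum_x (phi t x)^* * phi t x.
pose A := fun t => P t && (w t * nn t != 0).
have nn0 t : 0 <= nn t by apply: normsq_ge0.
have Ph t : A t -> P t by case/andP.
have zero t : P t -> ~~ A t -> forall x, w t * phi t x = 0.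
  move=> Pt; rewrite /A Pt /= negbK mulf_eq0 => /orP [/eqP -> x|/eqP H x].
    by rewrite mul0r.
  by rewrite (normsq_eq0 H) mulr0.
have sq t : A t -> sqrtC (nn t) != 0.
  by case/andP => _; rewrite mulf_eq0 negb_or sqrtC_eq0 => /andP[].
have sqr t : (sqrtC (nn t))^* = sqrtC (nn t) by rewrite geC0_conj // sqrtC_ge0.
exists #|A|, (fun j => w (enum_val j) * nn (enum_val j)),
  (fun j x => (sqrtC (nn (enum_val j)))^-1 * phi (enum_val j) x).
split.
- by move=> j; have /Ph Pj := enum_valP j; rewrite mulr_ge0 ?w0.
- rewrite -(big_enum_val (fun t => w t * nn t)) /=.
  rewrite (@sum_drop _ P A) //; last first.
    by move=> t Pt nA; rewrite /nn mulr_sumr big1 // => x _; rewrite mulrA mulrAC (zero t Pt nA) mul0r.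
  rewrite -tr1 /nn; under eq_bigr do rewrite mulr_sumr.
  rewrite exchange_big /=; apply: eq_bigr => x _; rewrite HX.
  by apply: eq_bigr => t _; rewrite mulrA mulrAC [_ * phi t x]mulrC.
- move=> j; split; last by apply: (Qc _ (phi (enum_val j))); exact: (Qphi _ (Ph _ (enum_valP j))).
  rewrite /unit_vec.
  have Aj := enum_valP j; set t := enum_val j in Aj *.
  have -> : \sum_x ((sqrtC (nn t))^-1 * phi t x)^* * ((sqrtC (nn t))^-1 * phi t x)
     = (sqrtC (nn t))^-1 ^+ 2 * nn t.
    rewrite /nn mulr_sumr; apply: eq_bigr => x _.
    by rewrite rmorphM /= fmorphV /= sqr; ring.
  by rewrite exprVn sqrtCK mulVf // -sqrtC_eq0 sq.
- move=> x y; rewrite HX -(@sum_drop _ P A) //; last first.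
    by move=> t Pt nA; rewrite (zero t Pt nA) mul0r.
  rewrite (big_enum_val (A := A)) /=.
  apply: eq_bigr => j _; rewrite /proj.
  have Aj := enum_valP j; set t := enum_val j in Aj *.
  have H2 := sq t Aj.
  have nt : nn t != 0 by rewrite -sqrtC_eq0.
  rewrite rmorphM /= fmorphV /= sqr.
  move: (sqrtCK (nn t)) H2; set s := sqrtC (nn t) => Hs H2.
  by rewrite -Hs; field.
Qed.


Lemma mix_density {I J : finType} (P : pred J) (w : J -> C)
  (phi : J -> @qvec R I) (X : @qop R I) :
  (forall t, P t -> 0 <= w t) ->
  (forall x y, X x y = \sum_(t | P t) w t * phi t x * (phi t y)^*) ->
  \sum_x X x x = 1 -> density X.
Proof.
move=> w0 HX tr1; split; [|split=> //].
  move=> x y; rewrite !HX rmorph_sum /=; apply: eq_bigr => t Pt.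
  by rewrite !rmorphM /= conjCK (geC0_conj (w0 t Pt)); ring.
move=> v.
have -> : \sum_x \sum_y (v x)^* * X x y * v y =
  \sum_(t | P t) w t * ((\sum_y (phi t y)^* * v y)^* * (\sum_y (phi t y)^* * v y)).
  have E : forall x y, (v x)^* * X x y * v y =
     \sum_(t | P t) w t * phi t x * (phi t y)^* * (v x)^* * v y.
    move=> x y; rewrite HX mulr_sumr mulr_suml; apply: eq_bigr => t _; ring.
  under eq_bigr do under eq_bigr do rewrite E.
  under eq_bigr do rewrite exchange_big /=.
  rewrite exchange_big /=; apply: eq_bigr => t _.
  rewrite rmorph_sum /= mulr_suml mulr_sumr; apply: eq_bigr => x _.
  rewrite mulr_sumr mulr_sumr; apply: eq_bigr => y _.
  by rewrite rmorphM /= conjCK; ring.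
apply: sumr_ge0 => t Pt; apply: mulr_ge0; first exact: w0.
by rewrite mulrC mul_conjC_ge0.
Qed.

Lemma hankel (f : nat -> C) (s t : nat) : (0 < s)%N -> (0 < t)%N ->
  (forall p p' q q', (p <= s)%N -> (p' <= s)%N -> (q <= t)%N -> (q' <= t)%N ->
     f (p + q)%N * f (p' + q')%N = f (p + q')%N * f (p' + q)%N) ->
  (exists c r, forall w, (w <= s + t)%N -> f w = c * r ^+ w) \/
  (forall w, (w < s + t)%N -> f w = 0).
Proof.
move=> s0 t0 H.
have E0 : forall w, (0 < w)%N -> (w < s + t)%N -> f w ^+ 2 = f w.-1 * f w.+1.
  move=> w w0 wN; pose p := minn w.-1 s.-1; pose q := (w - p)%N.
  have := H p p.+1 q q.-1 _ _ _ _.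
  have e1 : (p + q = w)%N by rewrite /q /p; lia.
  have e2 : (p.+1 + q.-1 = w)%N by rewrite /q /p; lia.
  have e3 : (p + q.-1 = w.-1)%N by rewrite /q /p; lia.
  have e4 : (p.+1 + q = w.+1)%N by rewrite /q /p; lia.
  rewrite e1 e2 e3 e4 expr2; apply; rewrite /q /p; lia.
case: (eqVneq (f 1%N) 0) => [f1|f1].
  have Z : forall w, (0 < w)%N -> (w < s + t)%N -> f w = 0.
    elim=> [//|w IH] _ wN.
    case: (posnP w) => [->//|w0].
    have := E0 w.+1 isT wN; rewrite /= (IH w0 (ltnW wN)) mul0r.
    by move/eqP; rewrite expf_eq0 /= => /eqP.
  have := H s 0%N 0%N t (leqnn _) (leq0n _) (leq0n _) (leqnn _).
  rewrite !addn0 !add0n (Z s) // ?mul0r; last by lia.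
  case: (eqVneq (f 0%N) 0) => [f0|f0] E.
    by right => w wN; case: (posnP w) => [->//|w0]; apply: Z.
  left; exists (f 0%N), 0 => w wN.
  case: (posnP w) => [->|w0]; first by rewrite expr0 mulr1.
  rewrite expr0n (gtn_eqF w0) mulr0.
  case: (ltngtP w (s + t)) wN => // [wl _|-> _]; first by apply: Z.
  by move/esym/eqP: E; rewrite mulf_eq0 (negbTE f0) orbF => /eqP.
have f0 : f 0%N != 0.
  apply/eqP => f0; have := E0 1%N isT; rewrite /= f0 mul0r => E.
  have /eqP : f 1%N ^+ 2 = 0 by apply: E; lia.
  by rewrite expf_eq0 /= (negbTE f1).
left; exists (f 0%N), (f 1%N / f 0%N).
have r0 : f 1%N / f 0%N != 0 by rewrite mulf_eq0 invr_eq0 negb_or f1 f0.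
suff G : forall w, (w.+1 <= s + t)%N ->
   f w = f 0%N * (f 1%N / f 0%N) ^+ w /\ f w.+1 = f 0%N * (f 1%N / f 0%N) ^+ w.+1.
  move=> [|w] wN; first by rewrite expr0 mulr1.
  by case: (G w wN).
elim=> [_|w IH wN]; first by split; [rewrite expr0 mulr1 | rewrite expr1; field].
have [IH1 IH2] := IH (ltnW wN); split => //.
have := E0 w.+1 isT wN; rewrite /= IH1 IH2 => E.
have nz : f 0%N * (f 1%N / f 0%N) ^+ w != 0 by rewrite mulf_neq0 // expf_neq0.
apply: (mulfI nz); rewrite -E !exprS expr0; ring.
Qed.



Definition wt {I : finType} (x : cfg I) := #|[set i | x i]|.

Lemma wt_swap {I : finType} (a b : I) x : wt (swapcfg a b x) = wt x.
Proof.
rewrite /wt (_ : [set k | swapcfg a b x k] = tperm a b @: [set k | x k]).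
  by rewrite card_imset //; apply: perm_inj.
by apply/setP => k; rewrite mem_tperm_imset !inE ffunE.
Qed.

Lemma sym_weight {I : finType} (psi : @qvec R I) :
  symmetric_vec psi -> forall x y, wt x = wt y -> psi x = psi y.
Proof.
move=> Hs x y.
move: {2}#|[set i | x i != y i]| (leqnn #|[set i | x i != y i]|) => N.
elim: N x => [|N IH] x HN Hw.
  move: HN; rewrite leqn0 cards_eq0 => /eqP D0.
  congr psi; apply/ffunP => i; apply/eqP; apply/negPn/negP => Hi.
  have : i \in [set i | x i != y i] by rewrite inE Hi.
  by rewrite D0 inE.
case: (eqVneq x y) => [->//|xy].
have AB : [set i | x i] != [set i | y i].
  apply: contra xy => /eqP E; apply/eqP/ffunP => i.
  by move/setP: E => /(_ i); rewrite !inE; case: (x i); case: (y i).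
have nAB : ~~ ([set i | x i] \subset [set i | y i]).
  apply: contra AB => H; rewrite eqEcard H /=; move: Hw; rewrite /wt => ->.
  exact: leqnn.
have nBA : ~~ ([set i | y i] \subset [set i | x i]).
  apply: contra AB => H; rewrite eq_sym eqEcard H /=; move: Hw; rewrite /wt => ->.
  exact: leqnn.
case/subsetPn: nAB => i; rewrite !inE => xi yi.
case/subsetPn: nBA => j; rewrite !inE => yj xj.
have ij : i != j by apply: contraNneq xj => <-.
rewrite -(Hs i j x); apply: IH; last by rewrite wt_swap.
rewrite -ltnS; apply: leq_trans HN; apply: proper_card; apply/properP; split.
  apply/subsetP => k; rewrite !inE ffunE.
  case: (tpermP i j k) => [->|->|ki kj] //.
  - by rewrite (negbTE xj) (negbTE yi).
  - by rewrite xi yj.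
exists i; first by rewrite inE xi (negbTE yi).
by rewrite inE ffunE tpermL (negbTE xj) (negbTE yi).
Qed.


Lemma sub_card {I : finType} (A : {set I}) p :
  (p <= #|A|)%N -> exists B : {set I}, B \subset A /\ #|B| = p.
Proof.
elim: p => [_|p IH H]; first by exists (set0 : {set I}); rewrite sub0set cards0.
have [B [BA Bp]] := IH (ltnW H).
have : ~~ (A \subset B).
  by apply/negP => /subset_leq_card; rewrite Bp leqNgt H.
case/subsetPn => x xA xB; exists (x |: B); split.
  by rewrite subUset sub1set xA BA.
by rewrite cardsU1 xB Bp.
Qed.

Definition ind {I : finType} (B : {set I}) : cfg I := [ffun i => i \in B].

Lemma wt_ind {I : finType} (B : {set I}) : wt (ind B) = #|B|.
Proof. by rewrite /wt (_ : [set i | ind B i] = B) //; apply/setP => i; rewrite inE ffunE. Qed.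

Definition fpsi {I : finType} (psi : @qvec R I) (w : nat) : C :=
  if [pick B : {set I} | #|B| == w] is Some B then psi (ind B) else 0.

Lemma fpsiE {I : finType} (psi : @qvec R I) :
  symmetric_vec psi -> forall x, psi x = fpsi psi (wt x).
Proof.
move=> Hs x; rewrite /fpsi; case: pickP => [B /eqP HB|H].
  by apply: sym_weight => //; rewrite wt_ind HB.
by have := H [set i | x i]; rewrite eqxx.
Qed.

Lemma sep_rank {I : finType} (S : {set I}) (psi : @qvec R I) :
  sep_wrt S psi -> forall x y, psi x * psi y = psi (mixc S x y) * psi (mixc S y x).
Proof.
case=> al [be H] x y.
have E1 : forall u v, restr S (mixc S u v) = restr S u.
  by move=> u v; apply/ffunP => j; rewrite !ffunE (valP j).
have E2 : forall u v, restr (~: S) (mixc S u v) = restr (~: S) v.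
  move=> u v; apply/ffunP => j; rewrite !ffunE.
  by have := valP j; rewrite inE => /negbTE ->.
by rewrite !H !E1 !E2; ring.
Qed.

Lemma card_disj {I : finType} (S B1 B2 : {set I}) :
  B1 \subset S -> B2 \subset ~: S -> #|B1 :|: B2| = (#|B1| + #|B2|)%N.
Proof.
move=> H1 H2; rewrite -cardsUI (_ : B1 :&: B2 = set0) ?cards0 ?addn0 //.
apply/setP => i; rewrite !inE; apply/negP => /andP [i1 i2].
by have := subsetP H2 _ i2; rewrite inE (subsetP H1 _ i1).
Qed.

Lemma prod_if_r {I : finType} (x : cfg I) (r : C) :
  \prod_i (if x i then r else 1) = r ^+ wt x.
Proof.
rewrite -big_mkcond /= /wt -prodr_const; apply: eq_bigl => i; by rewrite inE.
Qed.

Lemma symsep_prod {I : finType} (psi : @qvec R I) (S : {set I}) :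
  symmetric_vec psi -> sep_wrt S psi -> S != set0 -> S != setT ->
  exists (c : C) (b : bool -> C), forall x, psi x = c * \prod_i b (x i).
Proof.
move=> Hs Hsep S0 ST.
have s0 : (0 < #|S|)%N by rewrite card_gt0.
have t0 : (0 < #|~: S|)%N.
  rewrite card_gt0; apply: contraNneq ST => H.
  by rewrite -(setCK S) H setC0.
have Hk := hankel s0 t0.
have HH : forall p p' q q', (p <= #|S|)%N -> (p' <= #|S|)%N ->
    (q <= #|~: S|)%N -> (q' <= #|~: S|)%N ->
    fpsi psi (p + q)%N * fpsi psi (p' + q')%N =
    fpsi psi (p + q')%N * fpsi psi (p' + q)%N.
  move=> p p' q q' hp hp' hq hq'.
  have [B1 [B1S B1c]] := sub_card hp.
  have [B1' [B1S' B1c']] := sub_card hp'.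
  have [B2 [B2S B2c]] := sub_card hq.
  have [B2' [B2S' B2c']] := sub_card hq'.
  have M : forall A1 A2 A1' A2' : {set I}, A1 \subset S -> A2 \subset ~: S ->
      A1' \subset S -> A2' \subset ~: S ->
      mixc S (ind (A1 :|: A2)) (ind (A1' :|: A2')) = ind (A1 :|: A2').
    move=> A1 A2 A1' A2' h1 h2 h1' h2'; apply/ffunP => i; rewrite !ffunE !inE.
    case: (boolP (i \in S)) => iS.
      have n2 : i \notin A2 by apply/negP => /(subsetP h2); rewrite inE iS.
      have n2' : i \notin A2' by apply/negP => /(subsetP h2'); rewrite inE iS.
      by rewrite (negbTE n2) (negbTE n2').
    have n1' : i \notin A1' by apply/negP => /(subsetP h1'); rewrite (negbTE iS).
    have n1 : i \notin A1 by apply/negP => /(subsetP h1); rewrite (negbTE iS).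
    by rewrite (negbTE n1) (negbTE n1').
  have W : forall A1 A2 : {set I}, A1 \subset S -> A2 \subset ~: S ->
      fpsi psi (#|A1| + #|A2|)%N = psi (ind (A1 :|: A2)).
    by move=> A1 A2 h1 h2; rewrite (fpsiE Hs) wt_ind (card_disj h1 h2).
  rewrite -B1c -B1c' -B2c -B2c' !W //.
  by rewrite (sep_rank Hsep) (M _ _ _ _ B1S B2S B1S' B2S') (M _ _ _ _ B1S' B2S' B1S B2S).
have N : (#|S| + #|~: S| = #|I|)%N by rewrite cardsC.
have wtN (x : cfg I) : (wt x <= #|I|)%N by apply: max_card.
case: (Hk (fpsi psi) HH) => [[c [r Hc]]|Hz].
  exists c, (fun b => if b then r else 1) => x.
  by rewrite prod_if_r (fpsiE Hs) Hc // N.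
exists (fpsi psi #|I|), (fun b => if b then 1 else 0) => x.
rewrite (fpsiE Hs); case: (boolP [forall i, x i]) => [/forallP Ha|].
  have -> : wt x = #|I|.
    rewrite /wt -cardsT (_ : [set i | x i] = setT) //.
    by apply/setP => i; rewrite !inE Ha.
  by rewrite big1 ?mulr1 // => i _; rewrite Ha.
rewrite negb_forall => /existsP [i xi].
rewrite (bigD1 i) //= (negbTE xi) mul0r mulr0 Hz // N.
rewrite /wt -cardsT; apply: proper_card; rewrite properT.
by apply/negP => /eqP/setP/(_ i); rewrite !inE (negbTE xi).
Qed.

Lemma prod_fullsep {I : finType} (c : C) (b : bool -> C) :
  pure_fullsep (fun x : cfg I => c * \prod_i b (x i)).
Proof.
move=> S; exists (fun x' => c * \prod_(j : sub S) b (x' j)),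
  (fun x'' => \prod_(j : sub (~: S)) b (x'' j)) => x.
rewrite (prod_split S) mulrA; congr (_ * _ * _); apply: eq_bigr => j _; by rewrite ffunE.
Qed.


Lemma symst_swap1 {I : finType} (rho : @qop R I) :
  symmetric_state rho -> forall a b x y, rho (swapcfg a b x) y = rho x y.
Proof.
case=> _ Hs a b x y.
have E : forall x', apply_op rho (fun z => if z == y then 1 else 0) x' = rho x' y.
  move=> x'; rewrite /apply_op (bigD1 y) //= eqxx mulr1 big1 ?addr0 //.
  by move=> z /negbTE ->; rewrite mulr0.
by rewrite -!E Hs.
Qed.

Lemma symst_swap2 {I : finType} (rho : @qop R I) :
  symmetric_state rho -> forall a b x y,
    rho (swapcfg a b x) (swapcfg a b y) = rho x y.
Proof.
move=> H a b x y; have [[Hh _] _] := H.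
by rewrite symst_swap1 // Hh symst_swap1 // -Hh.
Qed.

Definition prodsym {I : finType} (psi : @qvec R I) : Prop :=
  exists (c : C) (b : bool -> C), forall x, psi x = c * \prod_i b (x i).

Lemma prodsym_scale {I : finType} (c : C) (psi : @qvec R I) :
  prodsym psi -> prodsym (fun x => c * psi x).
Proof. by case=> c' [b H]; exists (c * c'), b => x; rewrite H mulrA. Qed.

Lemma prodsym_fullsep {I : finType} (psi : @qvec R I) :
  prodsym psi -> pure_fullsep psi.
Proof.
case=> c [b H] S; have [al [be H2]] := prod_fullsep c b S.
by exists al, be => x; rewrite H H2.
Qed.

Lemma conv_mono {I : finType} (P1 P2 : @qvec R I -> Prop) (X : @qop R I) :
  (forall psi, P1 psi -> P2 psi) -> conv_pure P1 X -> conv_pure P2 X.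
Proof.
move=> H [m [p [psi [H1 H2 H3 H4]]]]; exists m, p, psi; split => //.
by move=> j; have [U P] := H3 j; split => //; apply: H.
Qed.

Lemma glue_in {I : finType} (S : {set I}) x z (j : sub S) : glue S x z (val j) = x j.
Proof.
rewrite ffunE; case: insubP => [k _ Hk|H]; first by congr (x _); apply: val_inj.
by rewrite (valP j) in H.
Qed.

Lemma glue_out {I : finType} (S : {set I}) x z (j : sub (~: S)) :
  glue S x z (val j) = z (val j).
Proof.
rewrite ffunE; case: insubP => [k Hk _|//].
by have := valP j; rewrite inE Hk.
Qed.

Lemma prodsym_glue {I : finType} (S : {set I}) z (psi : @qvec R I) :
  prodsym psi -> prodsym (fun x : cfg (sub S) => psi (glue S x z)).
Proof.
case=> c [b H]; exists (c * \prod_(j : sub (~: S)) b (z (val j))), b => x.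
have E1 : \prod_(j : sub S) b (glue S x z (val j)) = \prod_(j : sub S) b (x j).
  by apply: eq_bigr => j _; rewrite glue_in.
have E2 : \prod_(j : sub (~: S)) b (glue S x z (val j)) =
          \prod_(j : sub (~: S)) b (z (val j)).
  by apply: eq_bigr => j _; rewrite glue_out.
rewrite H (prod_split S) E1 E2; ring.
Qed.

Lemma conv_upgrade {I : finType} (Q : @qvec R I -> Prop) (X : @qop R I) m
  (p : 'I_m -> C) (psi : 'I_m -> @qvec R I) :
  (forall (c : C) v, Q v -> Q (fun x => c * v x)) ->
  (forall j, 0 <= p j) -> \sum_j p j = 1 -> (forall j, unit_vec (psi j)) ->
  (forall x y, X x y = \sum_j p j * proj (psi j) x y) ->
  (forall j, p j != 0 -> Q (psi j)) -> conv_pure Q X.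
Proof.
move=> Qc p0 p1 U HX HQ.
apply: (@mix_conv I 'I_m Q (fun j => p j != 0) p psi X Qc HQ (fun j _ => p0 j)).
  move=> x y; rewrite HX (@sum_drop _ xpredT (fun j => p j != 0)) //.
    by apply: eq_bigr => j _; rewrite /proj mulrA.
  by move=> t _; rewrite negbK => /eqP ->; rewrite !mul0r.
under eq_bigr do rewrite HX.
rewrite exchange_big /= -p1; apply: eq_bigr => j _.
by rewrite -mulr_sumr -[RHS]mulr1 -(U j); congr (_ * _); apply: eq_bigr => x _;
  rewrite /proj mulrC.
Qed.


Lemma sum_glue {I : finType} (S : {set I}) (F : cfg I -> C) :
  \sum_u F u = \sum_(x : cfg (sub S)) \sum_(z | zon S z) F (glue S x z).
Proof.
rewrite pair_big_dep /=.
rewrite (reindex_onto (fun p : cfg (sub S) * cfg I => glue S p.1 p.2)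
                      (fun u => (restr S u, mixc S cfg0 u))) /=; last first.
  move=> u _; rewrite glue_restr; apply/ffunP => i; rewrite !ffunE.
  by case: (i \in S).
apply: eq_bigl => -[x z] /=; rewrite restr_glue; apply/eqP/idP.
  case=> <-; apply/zonP => i Hi; rewrite !ffunE Hi //.
move=> /zonP Hz; congr (_, _); apply/ffunP => i; rewrite !ffunE.
case: (boolP (i \in S)) => Hi; first by rewrite Hz.
by case: insubP => [k Hk _|//]; rewrite Hk in Hi.
Qed.

Lemma trace_ptrace {I : finType} (S : {set I}) (X : @qop R I) :
  \sum_x ptrace S X x x = \sum_u X u u.
Proof. by rewrite (sum_glue S). Qed.

Lemma conv_trace {I : finType} (Q : @qvec R I -> Prop) (X : @qop R I) :
  conv_pure Q X -> \sum_u X u u = 1.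
Proof.
case=> m [p [psi [p0 p1 U HX]]].
under eq_bigr do rewrite HX.
rewrite exchange_big /= -p1; apply: eq_bigr => j _.
have [Uj _] := U j.
by rewrite -mulr_sumr -[RHS]mulr1 -Uj; congr (_ * _); apply: eq_bigr => x _;
  rewrite /proj mulrC.
Qed.

Lemma ptrace_conv_prodsym {I : finType} (S : {set I}) (X : @qop R I) :
  conv_pure prodsym X -> conv_pure prodsym (ptrace S X).
Proof.
move=> HX; have tr := conv_trace HX.
case: HX => m [p [psi [p0 p1 U HX]]].
apply: (@mix_conv _ ('I_m * cfg I)%type prodsym (fun t => zon S t.2)
   (fun t => p t.1) (fun t x => psi t.1 (glue S x t.2))).
- by move=> c v; apply: prodsym_scale.
- by move=> t _; apply: prodsym_glue; have [_ ?] := U t.1.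
- by move=> t _; apply: p0.
- move=> x y; rewrite /ptrace; under eq_bigr do rewrite HX.
  rewrite exchange_big /= pair_big_dep /=.
  by apply: eq_bigr => t _; rewrite /proj mulrA.
- by rewrite trace_ptrace.
Qed.


Lemma ptr_swap_in {I : finType} (T : {set I}) (X : @qop R I) (a b : I) :
  a \in T -> b \in T -> (forall x y, X (swapcfg a b x) y = X x y) ->
  forall u v, ptr T X (swapcfg a b u) v = ptr T X u v.
Proof.
move=> aT bT HX u v; rewrite !ptrE; apply: eq_bigr => z _.
rewrite -[in RHS]HX; congr X; apply/ffunP => i; rewrite !ffunE.
case: (boolP (i \in T)) => iT.
  by case: (tpermP a b i) => [_|_|_ _]; rewrite ?aT ?bT ?iT.
have ia : i != a by apply: contraNneq iT => ->.
have ib : i != b by apply: contraNneq iT => ->.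
by rewrite tpermD 1?eq_sym // (negbTE iT).
Qed.

Lemma conv_ext {I : finType} (Q : @qvec R I -> Prop) (X Y : @qop R I) :
  (forall x y, X x y = Y x y) -> conv_pure Q X -> conv_pure Q Y.
Proof.
move=> E [m [p [psi [H1 H2 H3 H4]]]]; exists m, p, psi; split => //.
by move=> x y; rewrite -E.
Qed.

Lemma bisep_compat_prodsym {I : finType} (rho sigma : @qop R I) (Sc : {set {set I}}) :
  symmetric_state rho ->
  (forall a b : I, exists2 T, T \in Sc & (a \in T) && (b \in T)) ->
  compatible rho Sc sigma -> biseparable sigma -> conv_pure prodsym sigma.
Proof.
move=> Hr HT [_ Hc] [m [p [psi [p0 p1 U HX]]]].
apply: (conv_upgrade (psi := psi)) => //.
- by move=> c v; apply: prodsym_scale.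
- by move=> j; have [] := U j.
move=> j pj; have [_ [S [S0 ST HS]]] := U j.
apply: (symsep_prod _ HS) => // a b x.
have [T TS /andP [aT bT]] := HT a b.
pose z := mixc T cfg0 x.
have zT : zon T z by apply/zonP => i Hi; rewrite ffunE Hi ffunE.
have := @symA I ('I_m * cfg I)%type (fun t => zon T t.2) (ptr T sigma)
   (fun t => p t.1) (fun t u => psi t.1 (mixc T u t.2)) (swapcfg a b)
   (fun t _ => p0 t.1) _ _ (j, z) x zT pj.
have E1 : mixc T x z = x.
  by apply/ffunP => i; rewrite !ffunE; case: (i \in T).
have E2 : mixc T (swapcfg a b x) z = swapcfg a b x.
  apply/ffunP => i; rewrite !ffunE; case: (boolP (i \in T)) => // iT.
  have ia : i != a by apply: contraNneq iT => ->.
  have ib : i != b by apply: contraNneq iT => ->.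
  by rewrite tpermD 1?eq_sym.
rewrite /= E1 E2; apply.
- move=> u v; rewrite ptrE.
  rewrite (eq_bigr (fun z => \sum_j p j * proj (psi j) (mixc T u z) (mixc T v z)));
    last by move=> z' _; rewrite HX.
  rewrite exchange_big /= pair_big_dep /=.
  by apply: eq_bigr => t _; rewrite /proj mulrA.
- move=> u v; rewrite /ptr !Hc //; have := ptr_swap_in aT bT (symst_swap1 Hr a b).
  by rewrite /ptr => ->.
Qed.


Lemma card_first n k : (k <= n)%N -> #|first n k| = k.
Proof.
elim: k => [_|k IH kn].
  by apply/eqP; rewrite cards_eq0; apply/eqP/setP => i; rewrite !inE ltn0.
have -> : first n k.+1 = (Ordinal kn) |: first n k.
  by apply/setP => i; rewrite !inE ltnS leq_eqVlt -val_eqE.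
by rewrite cardsU1 IH ?(ltnW kn) // inE /= ltnn.
Qed.

Lemma detect_upper n (rho : @qop R 'I_n) k :
  symmetric_state rho -> (2 <= k)%N -> (k <= n)%N ->
  entangled (ptrace (first n k) rho) ->
  detects_GME [set S : {set 'I_n} | (#|S| <= k)%N] rho.
Proof.
move=> Hr k2 kn He sigma Hc HB; apply: He.
have Hs := bisep_compat_prodsym Hr _ Hc HB.
have Hp : conv_pure prodsym sigma.
  apply: Hs => a b; exists [set a; b]; last by rewrite !inE !eqxx orbT.
  by rewrite inE cards2; apply: leq_trans k2; case: (a != b).
apply: (conv_mono (@prodsym_fullsep _)).
apply: (conv_ext _ (ptrace_conv_prodsym (first n k) Hp)) => x y.
by case: Hc => _ ->; rewrite // inE card_first.
Qed.


Lemma val_tperm {I : finType} (M : {set I}) (a b j : sub M) :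
  val (tperm a b j) = tperm (val a) (val b) (val j).
Proof.
case: (tpermP a b j) => [->|->|ja jb]; rewrite ?tpermL ?tpermR //.
rewrite tpermD //; apply/eqP => /val_inj E; [apply: ja | apply: jb]; by rewrite E.
Qed.

Lemma ptrace_swap_sub {I : finType} (M : {set I}) (rho : @qop R I) :
  (forall a b x y, rho (swapcfg a b x) y = rho x y) ->
  forall (a b : sub M) x y, ptrace M rho (swapcfg a b x) y = ptrace M rho x y.
Proof.
move=> Hr a b x y.
have E : swapcfg a b x = restr M (swapcfg (val a) (val b) (glue M x cfg0)).
  by apply/ffunP => j; do 3 rewrite ffunE; rewrite -val_tperm glue_in.
rewrite E -{2}(restr_glue x cfg0) -(restr_glue y cfg0).
have := @ptr_swap_in I M rho (val a) (val b) (valP a) (valP b) (Hr _ _).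
by rewrite /ptr => ->.
Qed.

Lemma fullsep_conv_prodsym {I : finType} (i0 i1 : I) (X : @qop R I) :
  i0 != i1 ->
  (forall a b x y, X (swapcfg a b x) y = X x y) ->
  conv_pure pure_fullsep X -> conv_pure prodsym X.
Proof.
move=> i01 HX [m [p [psi [p0 p1 U HD]]]].
apply: (conv_upgrade (psi := psi)) => //.
- by move=> c v; apply: prodsym_scale.
- by move=> j; have [] := U j.
move=> j pj; have [_ Hf] := U j.
apply: (symsep_prod (S := [set i0])) => //.
- move=> a b x.
  apply: (@symA I 'I_m xpredT X p psi (swapcfg a b) (fun t _ => p0 t)) => //.
  by move=> x' y'; rewrite HD; apply: eq_bigr => t _; rewrite /proj mulrA.
- by apply/eqP => /setP /(_ i0); rewrite !inE eqxx.
- by apply/eqP => /setP /(_ i1); rewrite !inE eq_sym (negbTE i01).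
Qed.


Section OneQubit.
Variables (I : finType) (i0 : I).
Hypothesis Hi : forall i : I, i = i0.

Let e (b : bool) : cfg I := [ffun => b].

Let xe (x : cfg I) : x = e (x i0).
Proof. by apply/ffunP => i; rewrite ffunE (Hi i). Qed.

Let sum2 (F : cfg I -> C) : \sum_x F x = \sum_(b : bool) F (e b).
Proof.
rewrite (reindex e) //; exists (fun x : cfg I => x i0) => [b _|x _]; first by rewrite ffunE.
by rewrite -xe.
Qed.

Let sum2a (a : bool) (F : cfg I -> C) : \sum_x F x = F (e a) + F (e (~~ a)).
Proof. by rewrite sum2 big_bool; case: a => //=; rewrite addrC. Qed.

Lemma all_prodsym (psi : @qvec R I) : prodsym psi.
Proof.
exists 1, (fun b => psi (e b)) => x; rewrite mul1r (bigD1 i0) //= big1 ?mulr1.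
  by rewrite -xe.
by move=> i; rewrite (Hi i) eqxx.
Qed.

Lemma one_qubit_conv (X : @qop R I) : density X -> conv_pure prodsym X.
Proof.
case=> Hh [Hp tr].
have [a Aa] : exists a, X (e a) (e a) != 0.
  case: (eqVneq (X (e true) (e true)) 0) => H; last by exists true.
  exists false; move: tr; rewrite (sum2a true) H add0r => ->; exact: oner_neq0.
set A := X (e a) (e a) in Aa.
set B := X (e a) (e (~~ a)).
set D := X (e (~~ a)) (e (~~ a)).
have ea : forall b, e b i0 = b by move=> b; rewrite ffunE.
have ne : forall b, (~~ b == b) = false by case.
have BC : X (e (~~ a)) (e a) = B^* by rewrite Hh.
have Hv : forall v : @qvec R I,
    \sum_x \sum_y (v x)^* * X x y * v y =
    (v (e a))^* * A * v (e a) + (v (e a))^* * B * v (e (~~ a)) +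
    ((v (e (~~ a)))^* * B^* * v (e a) + (v (e (~~ a)))^* * D * v (e (~~ a))).
  by move=> v; rewrite (sum2a a) !(sum2a a) BC.
have A0 : 0 <= A.
  have := Hp (fun x => if x i0 == a then 1 else 0).
  by rewrite Hv !ea eqxx ne rmorph0 rmorph1 !mulr0 !mul0r !addr0 mulr1 mul1r.
have Ap : 0 < A by rewrite lt_def Aa.
have K0 : 0 <= A * D - B * B^*.
  have := Hp (fun x => if x i0 == a then - B else A).
  rewrite Hv !ea eqxx ne (geC0_conj A0) rmorphN /=.
  have -> : (- B^*) * A * (- B) + (- B^*) * B * A + (A * B^* * (- B) + A * D * A)
     = A * (A * D - B * B^*) by ring.
  by rewrite pmulr_rge0.
pose w := fun t : bool => if t then A^-1 else (A * D - B * B^*) / A.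
pose phi := fun (t : bool) (x : cfg I) =>
  if t then (if x i0 == a then A else B^*) else (if x i0 == a then 0 else 1).
apply: (@mix_conv I bool prodsym xpredT w phi).
- by move=> c v; apply: prodsym_scale.
- by move=> t _; apply: all_prodsym.
- by move=> [] _; rewrite /w ?invr_ge0 ?divr_ge0 // ltW.
- move=> x y; rewrite big_bool /w /phi /=.
  have c0 : (0 : C)^* = 0 by rewrite conjC0.
  have c1 : (1 : C)^* = 1 by rewrite conjC1.
  have Ex : x = e (x i0) := xe x.
  have Ey : y = e (y i0) := xe y.
  have bcase : forall u v : bool, u = v \/ u = ~~ v by do 2 case; auto.
  have [xa|xa] := bcase (x i0) a.
  + have [ya|ya] := bcase (y i0) a.
    * rewrite Ex Ey xa ya !ea eqxx ?c0 ?c1 (geC0_conj A0) -/A.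
      by field; rewrite Aa.
    * rewrite Ex Ey xa ya !ea eqxx ne ?c0 ?c1 conjCK -/B.
      by field; rewrite Aa.
  + have [ya|ya] := bcase (y i0) a.
    * rewrite Ex Ey xa ya !ea eqxx ne ?c0 ?c1 (geC0_conj A0) BC.
      by field; rewrite Aa.
    * rewrite Ex Ey xa ya !ea ne ?c0 ?c1 conjCK -/D.
      by field; rewrite Aa.
- exact: tr.
Qed.

End OneQubit.


Lemma prod_if_set {I : finType} (K : {set I}) (F : I -> C) (a : C) :
  \prod_i (if i \in K then F i else a) = \prod_(k : sub K) F (val k) * a ^+ #|~: K|.
Proof.
rewrite (bigID (fun i => i \in K)) /=; congr (_ * _).
  by rewrite -big_sub; apply: eq_bigr => i ->.
rewrite -prodr_const; apply: eq_big => [i|i Hi]; first by rewrite inE.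
by rewrite (negbTE Hi).
Qed.

Definition nbb (b : bool -> C) := b false * (b false)^* + b true * (b true)^*.

Lemma sum_proj_prod {I : finType} (K : {set I}) (c : C) (b : bool -> C) (u v : cfg I) :
  \sum_(z | zon K z) (c * \prod_i b (mixc K u z i)) * (c * \prod_i b (mixc K v z i))^*
  = c * c^* * ((\prod_(k : sub K) (b (u (val k)) * (b (v (val k)))^*)) * nbb b ^+ #|~: K|).
Proof.
pose G i (t : bool) := if i \in K then b (u i) * (b (v i))^* else b t * (b t)^*.
have E : forall z, (c * \prod_i b (mixc K u z i)) * (c * \prod_i b (mixc K v z i))^*
    = c * c^* * \prod_i G i (z i).
  move=> z; rewrite rmorphM rmorph_prod /=.
  have -> : \prod_i G i (z i) =
      (\prod_i b (mixc K u z i)) * \prod_i (b (mixc K v z i))^*.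
    rewrite -big_split /=; apply: eq_bigr => i _.
    by rewrite /G !ffunE; case: (i \in K).
  ring.
rewrite (eq_bigr _ (fun z _ => E z)) -mulr_sumr sum_prod_zon; congr (_ * _).
rewrite -(prod_if_set K (fun i => b (u i) * (b (v i))^*)).
by apply: eq_bigr => i _; rewrite /G; case: (i \in K).
Qed.

Lemma normprod {I : finType} (c : C) (b : bool -> C) :
  \sum_(x : cfg I) (c * \prod_i b (x i)) * (c * \prod_i b (x i))^* =
  c * c^* * nbb b ^+ #|I|.
Proof.
have := @sum_proj_prod I set0 c b cfg0 cfg0.
have E : forall z : cfg I, mixc set0 cfg0 z = z.
  by move=> z; apply/ffunP => i; rewrite !ffunE inE.
rewrite (eq_bigl xpredT) => [|z]; last by apply/zonP => i; rewrite inE.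
under eq_bigr do rewrite E.
move=> ->; rewrite setC0 cardsT big1 ?mul1r // => k _.
by have := valP k; rewrite inE.
Qed.

Lemma nbb_ge0 (b : bool -> C) : 0 <= nbb b.
Proof. by rewrite /nbb addr_ge0 // mul_conjC_ge0. Qed.

Lemma ptr_transfer {I : finType} (S : {set I}) (X Y : @qop R I) (a b : I) :
  (forall x y, X (swapcfg a b x) (swapcfg a b y) = X x y) ->
  (forall x y, Y (swapcfg a b x) (swapcfg a b y) = Y x y) ->
  (forall u v, ptr (tperm a b @: S) X u v = ptr (tperm a b @: S) Y u v) ->
  forall u v, ptr S X u v = ptr S Y u v.
Proof. by move=> HX HY H u v; rewrite (ptr_swap _ _ _ HX) (ptr_swap _ _ _ HY) H. Qed.

Lemma lower_sigma {I : finType} (M : {set I}) (rho : @qop R I) :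
  symmetric_state rho -> (0 < #|M|)%N -> conv_pure prodsym (ptrace M rho) ->
  exists sigma, [/\ density sigma, fully_separable sigma &
    forall S : {set I}, (#|S| <= #|M|)%N ->
      forall x y, ptrace S sigma x y = ptrace S rho x y].
Proof.
move=> Hr M0 [m [p [phi [p0 p1 U HX]]]].
have [cb Hcb] : exists cb : 'I_m -> C * (bool -> C),
    forall j x, phi j x = (cb j).1 * \prod_i (cb j).2 (x i).
  apply: (@fin_all_exists _ (fun _ => (C * (bool -> C))%type)
     (fun j cb => forall x, phi j x = cb.1 * \prod_i cb.2 (x i))) => j.
  by have [_ [c [b H]]] := U j; exists (c, b).
pose c j := (cb j).1; pose b j := (cb j).2.
pose nb j := nbb (b j).
pose d := (#|I| - #|M|)%N.
pose Psi j (u : cfg I) := c j * \prod_i b j (u i).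
pose w j := p j / nb j ^+ d.
pose sigma u v := \sum_j w j * Psi j u * (Psi j v)^*.
have cardM : #|{: sub M}| = #|M| by rewrite card_sig; apply: eq_card => i; rewrite inE.
have unitj : forall j, c j * (c j)^* * nb j ^+ #|M| = 1.
  move=> j; have [Uj _] := U j; rewrite -cardM -normprod -[RHS]Uj.
  by apply: eq_bigr => x _; rewrite mulrC !Hcb.
have nb0 : forall j, nb j != 0.
  move=> j; apply/eqP => H; have := unitj j; rewrite H expr0n (gtn_eqF M0) /=.
  by rewrite mulr0 => /eqP; rewrite eq_sym oner_eq0.
have dI : #|I| = (d + #|M|)%N by rewrite /d subnK // max_card.
have dC : #|~: M| = d by rewrite /d -(cardsC M) addKn.
have w0 : forall j, 0 <= w j.
  by move=> j; rewrite divr_ge0 ?p0 // exprn_ge0 // nbb_ge0.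
have wE : forall j, w j * nb j ^+ d = p j.
  by move=> j; rewrite /w divfK // expf_neq0.
have HS : forall x y, sigma x y = \sum_(j | true) w j * Psi j x * (Psi j y)^*.
  by [].
have trs : \sum_u sigma u u = 1.
  rewrite /sigma exchange_big /= -p1; apply: eq_bigr => j _.
  rewrite (eq_bigr (fun u => w j * (Psi j u * (Psi j u)^*))); last first.
    by move=> u _; rewrite mulrA.
  rewrite -mulr_sumr /Psi normprod dI exprD -(wE j) -[RHS]mulr1 -(unitj j).
  rewrite -/(nb j); ring.
have Psi_sw : forall j a b' u, Psi j (swapcfg a b' u) = Psi j u.
  move=> j a b' u; rewrite /Psi; congr (_ * _).
  rewrite [RHS](reindex_inj (@perm_inj _ (tperm a b'))) /=.
  by apply: eq_bigr => i _; rewrite ffunE.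
have sig_sw : forall a b' x y, sigma (swapcfg a b' x) (swapcfg a b' y) = sigma x y.
  by move=> a b' x y; rewrite /sigma; apply: eq_bigr => j _; rewrite !Psi_sw.
have base : forall u v, ptr M sigma u v = ptr M rho u v.
  move=> u v; rewrite ptrE [RHS]/ptr HX /sigma exchange_big /=; apply: eq_bigr => j _.
  rewrite (eq_bigr (fun z => w j * (Psi j (mixc M u z) * (Psi j (mixc M v z))^*)));
    last by move=> z _; rewrite mulrA.
  rewrite -mulr_sumr sum_proj_prod /proj !Hcb dC -/(nb j) -/(c j) -/(b j).
  rewrite -(wE j).
  have E1 : forall t, \prod_i b j (restr M t i) = \prod_(k : sub M) b j (t (val k)).
    by move=> t; apply: eq_bigr => k _; rewrite ffunE.
  rewrite !E1 rmorphM rmorph_prod /= big_split /=; ring.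
have main : forall N (S : {set I}), (#|S :\: M| <= N)%N -> (#|S| <= #|M|)%N ->
    forall u v, ptr S sigma u v = ptr S rho u v.
  elim=> [|N IH] S HN HS'.
    have SM : S \subset M by rewrite -setD_eq0 -cards_eq0 -leqn0.
    move=> u v; rewrite (ptr_split _ _ _ SM) (ptr_split _ _ _ SM).
    by apply: eq_bigr => z _; apply: base.
  case: (boolP (S \subset M)) => SM.
    move=> u v; rewrite (ptr_split _ _ _ SM) (ptr_split _ _ _ SM).
    by apply: eq_bigr => z _; apply: base.
  case/subsetPn: SM => a aS aM.
  have : ~~ (M \subset S).
    apply/negP => MS; have : M == S by rewrite eqEcard MS HS'.
    by move/eqP => E; rewrite E aS in aM.
  case/subsetPn => b' bM bS.
  apply: (ptr_transfer (a := a) (b := b') (sig_sw a b') (symst_swap2 Hr a b')).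
  apply: IH; last by rewrite card_imset //; apply: perm_inj.
  rewrite -ltnS; apply: leq_trans HN; apply: proper_card; apply/properP; split.
    apply/subsetP => k; rewrite !inE mem_tperm_imset => /andP [kM kS].
    case: (tpermP a b' k) kS => [ka|kb|ka kb] kS; rewrite ?kM ?kS //.
    - by rewrite kS in bS.
    - by rewrite kb bM in kM.
  by exists a; rewrite !inE ?aM ?aS // mem_tperm_imset tpermL (negbTE bS) andbF.
exists sigma; split.
- exact: (mix_density (P := xpredT) (fun j _ => w0 j) HS trs).
- apply: (conv_mono (@prodsym_fullsep _)).
  apply: (@mix_conv I 'I_m prodsym xpredT w Psi sigma) => //.
  + by move=> c' v; apply: prodsym_scale.
  + by move=> j _; exists (c j), (b j).
- move=> S HS' x y; rewrite !(ptrace_ptr _ _ _ cfg0).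
  exact: (main _ S (leqnn _) HS').
Qed.


Lemma mixc_glue {I : finType} (S : {set I}) x z :
  zon S z -> mixc S cfg0 (glue S x z) = z.
Proof.
move=> /zonP Hz; apply/ffunP => i; rewrite !ffunE.
case: (boolP (i \in S)) => Hi; first by rewrite Hz.
by case: insubP => [k Hk _|//]; rewrite Hk in Hi.
Qed.

Lemma sum_glue_pick {I : finType} (S : {set I}) z (G : cfg I -> C) :
  zon S z -> (forall u, mixc S cfg0 u != z -> G u = 0) ->
  \sum_u G u = \sum_x G (glue S x z).
Proof.
move=> Hz HG; rewrite (sum_glue S); apply: eq_bigr => x _.
rewrite (bigD1 z) //= big1 ?addr0 // => z' /andP [z'S ne].
by apply: HG; rewrite mixc_glue.
Qed.

Lemma ptrace_density {I : finType} (S : {set I}) (X : @qop R I) :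
  density X -> density (ptrace S X).
Proof.
case=> Hh [Hp tr]; split; [|split].
- move=> x y; rewrite /ptrace rmorph_sum /=; apply: eq_bigr => z _; exact: Hh.
- move=> v.
  pose V z u := if mixc S cfg0 u == z then v (restr S u) else 0.
  have E : \sum_x \sum_y (v x)^* * ptrace S X x y * v y =
     \sum_(z | zon S z) \sum_u \sum_u' (V z u)^* * X u u' * V z u'.
    have E1 : forall x y, (v x)^* * ptrace S X x y * v y =
       \sum_(z | zon S z) (v x)^* * X (glue S x z) (glue S y z) * v y.
      by move=> x y; rewrite /ptrace mulr_sumr mulr_suml.
    under eq_bigr do under eq_bigr do rewrite E1.
    under eq_bigr do rewrite exchange_big /=.
    rewrite exchange_big /=; apply: eq_bigr => z Hz.
    rewrite (sum_glue_pick (S := S) (z := z)) //; last first.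
      by move=> u ne; rewrite big1 // => u' _; rewrite /V (negbTE ne) conjC0 !mul0r.
    apply: eq_bigr => x _.
    rewrite (sum_glue_pick (S := S) (z := z)) //; last first.
      by move=> u ne; rewrite /V (negbTE ne) mulr0.
    apply: eq_bigr => y _.
    by rewrite /V !mixc_glue // eqxx !restr_glue.
  by rewrite E; apply: sumr_ge0 => z _; apply: Hp.
- by rewrite trace_ptrace.
Qed.

Lemma ptrace_setT {I : finType} (X : @qop R I) u v :
  ptrace setT X (restr setT u) (restr setT v) = X u v.
Proof.
rewrite -/(ptr setT X u v) ptrE (big_pred1 cfg0).
  have E : forall t : cfg I, mixc setT t cfg0 = t by move=> t; apply/ffunP => i; rewrite !ffunE inE.
  by rewrite !E.
move=> z; apply/zonP/eqP => [H|->]; last by move=> i _; rewrite ffunE.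
by apply/ffunP => i; rewrite ffunE H ?inE.
Qed.

Lemma fullsep_bisep {I : finType} (i0 i1 : I) (psi : @qvec R I) :
  i0 != i1 -> pure_fullsep psi -> pure_bisep psi.
Proof.
move=> i01 H; exists [set i0]; split => //.
- by apply/eqP => /setP /(_ i0); rewrite !inE eqxx.
- by apply/eqP => /setP /(_ i1); rewrite !inE eq_sym (negbTE i01).
Qed.

End W.

Lemma min_exists (Q : nat -> Prop) k :
  Q k -> exists k', Q k' /\ forall j, (j < k')%N -> ~ Q j.
Proof.
elim: k {-2}k (leqnn k) => [|N IH] k kN Qk.
  exists k; split => // j; rewrite leqn0 in kN; by rewrite (eqP kN).
case: (classic (exists j, (j < k)%N /\ Q j)) => [[j [jk Qj]]|H].
  by apply: (IH j) => //; rewrite -ltnS; apply: leq_trans kN.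
exists k; split => // j jk Qj; apply: H; by exists j.
Qed.

Section Main.
Context {R : realType}.
Local Notation C := (R[i]).

Lemma mem_first n m i (h : (i < n)%N) : Ordinal h \in first n m = (i < m)%N.
Proof. by rewrite inE. Qed.

Definition elem_first n m i (h1 : (i < m)%N) (h2 : (m <= n)%N) : sub (first n m) :=
  exist _ (Ordinal (leq_trans h1 h2))
    (eq_ind_r is_true h1 (mem_first m (leq_trans h1 h2))).

Lemma rho_m_prodsym n (rho : @qop R 'I_n) m :
  symmetric_state rho -> (1 <= m <= n)%N ->
  ((2 <= m)%N -> ~ entangled (ptrace (first n m) rho)) ->
  conv_pure prodsym (ptrace (first n m) rho).
Proof.
move=> Hr /andP [m1 mn] Hne.
case: (ltngtP m 1) => [|m2|m1'].
- by rewrite ltnNge m1.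
- have e0 := elem_first (isT : (0 < 2)%N) (leq_trans m2 (leqnn _)).
  have h0 : (0 < m)%N by apply: leq_trans m2.
  have i01 : elem_first h0 mn != elem_first m2 mn.
    by apply/eqP => /(f_equal (fun t => val (val t))).
  apply: (fullsep_conv_prodsym i01 (ptrace_swap_sub (M := first n m) (symst_swap1 Hr))).
  by apply: Classical_Prop.NNPP; apply: Hne.
- subst m; have h0 : (0 < 1)%N by [].
  apply: (one_qubit_conv (i0 := elem_first h0 mn)).
    move=> i; apply: val_inj; apply: val_inj => /=.
    by have := valP i; rewrite inE ltnS leqn0 => /eqP.
  by apply: ptrace_density; case: Hr.
Qed.

Lemma not_detect n (rho : @qop R 'I_n) m (Sc : {set {set 'I_n}}) :
  (2 <= n)%N -> symmetric_state rho -> (1 <= m <= n)%N ->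
  conv_pure prodsym (ptrace (first n m) rho) ->
  (forall S, S \in Sc -> (#|S| <= m)%N) -> ~ detects_GME Sc rho.
Proof.
move=> n2 Hr /andP [m1 mn] Hc HS Hdet.
have M0 : (0 < #|first n m|)%N by rewrite card_first.
have [sigma [Hds Hfs Hsig]] := lower_sigma Hr M0 Hc.
have h0 : (0 < n)%N by apply: leq_trans n2.
have i01 : Ordinal h0 != Ordinal n2 by [].
apply: (Hdet sigma).
  split => // S HSc x y; apply: Hsig; rewrite card_first //; exact: HS.
exact: (conv_mono (fun psi => fullsep_bisep (psi := psi) i01) Hfs).
Qed.

End Main.

Theorem proposition1 (R : realType) (n : nat) (rho : @qop R 'I_n) :
  (2 <= n)%N ->
  symmetric_state rho ->
  entangled rho ->
  genuinely_entangled rho /\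
  exists k : nat,
    [/\ (2 <= k <= n)%N,
        entangled (ptrace (first n k) rho),
        (forall j : nat, (2 <= j < k)%N -> ~ entangled (ptrace (first n j) rho))
      & is_detection_length rho k].
Proof.
move=> n2 Hr He.
have Hd : density rho by case: Hr.
split.
  move=> HB; apply: He; apply: (conv_mono (fun psi => @prodsym_fullsep R _ psi)).
  apply: (bisep_compat_prodsym (Sc := [set setT]) Hr _ _ HB).
    by move=> a b; exists setT; rewrite ?inE.
  by split => // S _.
pose Q k := (2 <= k <= n)%N /\ entangled (ptrace (first n k) rho).
have Qn : Q n.
  split; first by rewrite n2 leqnn.
  move=> Hn.
  have Hc := @rho_m_prodsym R n rho n Hr.
  have n1 : (1 <= n <= n)%N by rewrite leqnn andbT; apply: leq_trans n2.
  have M0 : (0 < #|first n n|)%N by rewrite card_first //; apply: leq_trans n2.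
  have [sigma [Hds Hfs Hsig]] := lower_sigma Hr M0 (Hc n1 (fun _ E => E Hn)).
  apply: He; apply: (conv_ext _ Hfs) => u v.
  rewrite -(ptrace_setT sigma u v) -(ptrace_setT rho u v) Hsig //.
  by rewrite cardsT card_ord card_first.
have [k [[Hk Hek] Hmin]] := min_exists Qn.
have [k2 kn] := andP Hk.
exists k; split => //.
  move=> j /andP [j2 jk] Hej; apply: (Hmin j jk); split => //.
  by rewrite j2 /=; apply: leq_trans (ltnW jk) kn.
split.
  exists [set S : {set 'I_n} | (#|S| <= k)%N]; split.
    exact: detect_upper.
  apply/eqP; rewrite eqn_leq; apply/andP; split.
    by apply/bigmax_leqP => S; rewrite inE.
  have := @leq_bigmax_cond _ (fun S => S \in [set S : {set 'I_n} | (#|S| <= k)%N])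
     (fun S => #|S|) (first n k).
  by rewrite inE card_first // leqnn; apply.
move=> Sc HSc; rewrite leqNgt; apply/negP => Hlt.
have m1 : (1 <= k.-1 <= n)%N.
  by apply/andP; split; [rewrite -ltnS prednK // ltnW | apply: leq_trans (leq_pred _) kn].
have Hc := @rho_m_prodsym R n rho k.-1 Hr m1.
apply: (not_detect n2 Hr m1 _ _ HSc).
  apply: Hc => m2 Hem; apply: (Hmin k.-1).
    by rewrite ltn_predL; apply: leq_trans k2.
  split => //; rewrite m2 /=; by case/andP: m1.
move=> S HS; rewrite -ltnS prednK; last by apply: ltnW.
by apply: leq_ltn_trans Hlt; apply: (leq_bigmax_cond S).
Qed.
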